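(* Let $e_1,e_2,\dots$ be an exchangeable sequence of real random variables with $|e_i|\le K$ almost surely for a constant $K$. Let $M_k=\frac1k\sum_{i=1}^ke_i$ and $M_\infty=\lim_{k\to\infty}M_k$ (which exists almost surely). For every $\varepsilon>0$ there exists $\eta=\eta(K,\varepsilon)>0$, depending only on $K$ and $\varepsilon$, such that for all $l\in\mathbb N$ and all $n\in\mathbb N\cup\{\infty\}$ with $l<n$, $$\mathbb P\{|M_n-M_l|\ge\varepsilon\}\le2e^{-\eta l}.$$ *)

(* Defs.v *)
From HB Require Import structures.
From mathcomp Require Import all_boot all_order all_algebra all_fingroup.
From mathcomp Require Import all_classical all_reals all_analysis.
Set Implicit Arguments. Unset Strict Implicit. Unset Printing Implicit Defensive.
Import Order.TTheory GRing.Theory Num.Theory.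
Local Open Scope classical_set_scope.
Local Open Scope ring_scope.

(* Joint laws on R^n are compared on measurable rectangles B_0 x ... x B_{n-1},
   which form a pi-system generating the product sigma-algebra. *)
Definition exchangeable d (T : measurableType d) (R : realType)
    (P : probability T R) (e : nat -> T -> R) : Prop :=
  forall (n : nat) (s : 'S_n) (B : 'I_n -> set R),
    (forall i, measurable (B i)) ->
    P [set w | forall i : 'I_n, B i (e (s i) w)] =
    P [set w | forall i : 'I_n, B i (e i w)].

(* Empirical mean M_k = (1/k) sum_{i<k} e_i  (e_1,...,e_k in paper's indexing). *)
Definition Mk (R : realType) (T : Type) (e : nat -> T -> R) (k : nat) (w : T) : R :=
  (k%:R)^-1 * \sum_(i < k) e i w.

(* Main.v *)
Require Import Defs.
From HB Require Import structures.
From mathcomp Require Import all_boot all_order all_algebra all_fingroup.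
From mathcomp Require Import all_classical all_reals all_analysis.
From mathcomp Require Import lra ring.
Import Order.TTheory GRing.Theory Num.Theory numFieldNormedType.Exports.
Local Open Scope classical_set_scope.
Local Open Scope ring_scope.

Module Aux.
Set Implicit Arguments. Unset Strict Implicit. Unset Printing Implicit Defensive.
Section Real.
Variable R : realType.

Lemma expR_le_quad (y : R) : `|y| <= 2^-1 -> expR y <= 1 + y + 2 * y ^+ 2.
Proof.
move=> hy.
have hy1 : y <= 2^-1 /\ - 2^-1 <= y by move: hy; rewrite ler_norml; case/andP; split.
have h1 : 1 - y <= expR (- y) by rewrite -[1 - y]/(1 + - y); exact: expR_ge1Dx.
have hp : 0 < 1 - y by lra.
rewrite -[expR y]invrK -expRN.
have -> : 1 + y + 2 * y ^+ 2 = ((1 - y)^-1) * ((1 - y) * (1 + y + 2 * y ^+ 2)).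
  by rewrite mulKf // gt_eqF.
rewrite -[X in X <= _]mulr1.
apply: ler_pM.
- by rewrite invr_ge0 ltW ?expR_gt0.
- by lra.
- by rewrite lef_pV2 ?posrE ?expR_gt0.
- have : 0 <= y ^+ 2 * (1 - 2 * y) by apply: mulr_ge0; [exact: sqr_ge0|lra].
  by rewrite expr2; nra.
Qed.

Lemma ler_sum_seq (I : eqType) (r : seq I) (F G : I -> R) :
  (forall i, i \in r -> F i <= G i) -> \sum_(i <- r) F i <= \sum_(i <- r) G i.
Proof. by move=> h; rewrite big_seq [X in _ <= X]big_seq; apply: ler_sum. Qed.

Lemma sum_const_seq (I : Type) (r : seq I) (c : R) :
  \sum_(i <- r) c = (size r)%:R * c.
Proof. by rewrite big_const_seq count_predT iter_addr_0 mulr_natl. Qed.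

Definition meanR (xs : seq R) : R := (size xs)%:R^-1 * \sum_(x <- xs) x.

Lemma meanR_perm (xs ys : seq R) : perm_eq xs ys -> meanR xs = meanR ys.
Proof. by move=> h; rewrite /meanR (perm_size h) (perm_big _ h). Qed.

Lemma meanR_bound (K0 : R) (xs : seq R) : (forall x, x \in xs -> `|x| <= K0) ->
  0 <= K0 -> `|meanR xs| <= K0.
Proof.
move=> hx hK; rewrite /meanR normrM.
case: (posnP (size xs)) => [->|hs]; first by rewrite invr0 normr0 mul0r.
rewrite ger0_norm ?invr_ge0 ?ler0n // ler_pdivrMl ?ltr0n //.
apply: (le_trans (ler_norm_sum _ _ _)).
have : \sum_(x <- xs) `|x| <= \sum_(x <- xs) K0 by apply: ler_sum_seq => x hxs; exact: hx.
by rewrite sum_const_seq.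
Qed.

Lemma avg_exp_le (K0 u : R) (xs : seq R) : (0 < size xs)%N ->
  (forall x, x \in xs -> `|x| <= K0) -> 0 <= K0 -> 0 <= u -> 4 * K0 * u <= 1 ->
  (size xs)%:R^-1 * \sum_(x <- xs) expR (u * (x - meanR xs)) <= expR (8 * K0^+2 * u^+2).
Proof.
move=> hs hx hK hu hKu.
set mu := meanR xs.
have hmu : `|mu| <= K0 by exact: meanR_bound.
have step : forall x, x \in xs -> expR (u * (x - mu)) <= 1 + u * (x - mu) + 8 * K0^+2 * u^+2.
  move=> x hxs; have hxx := hx x hxs.
  have hd : `|x - mu| <= 2 * K0 by apply: (le_trans (ler_normB _ _)); lra.
  have hyy : `|u * (x - mu)| <= 2^-1.
    rewrite normrM ger0_norm //; have : u * `|x - mu| <= u * (2 * K0) by apply: ler_wpM2l.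
    by lra.
  apply: (le_trans (expR_le_quad hyy)); rewrite lerD2l.
  have : `|x - mu| ^+ 2 <= (2 * K0) ^+ 2 by apply: lerXn2r; rewrite ?nnegrE //; lra.
  rewrite real_normK ?num_real // => h2.
  rewrite exprMn; have hu2 : 0 <= u ^+ 2 by exact: sqr_ge0.
  have : u ^+ 2 * (x - mu) ^+ 2 <= u ^+ 2 * (2 * K0) ^+ 2 by exact: ler_wpM2l.
  rewrite exprMn; lra.
have hsum : \sum_(x <- xs) expR (u * (x - mu)) <=
            \sum_(x <- xs) (1 + u * (x - mu) + 8 * K0^+2 * u^+2).
  by apply: ler_sum_seq => x hxs; exact: step.
have hN : 0 < (size xs)%:R :> R by rewrite ltr0n.
rewrite ler_pdivrMl //.
apply: (le_trans hsum).
rewrite !big_split /= -!big_distrr /= big_split /= sumrN !sum_const_seq.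
have hmu' : (size xs)%:R * mu = \sum_(x <- xs) x by rewrite /mu /meanR mulrA mulfV ?mul1r // gt_eqF.
rewrite -hmu' subrr mulr0 addr0 mulr1.
have he : (size xs)%:R * (1 + 8 * K0 ^+ 2 * u ^+ 2) <= (size xs)%:R * expR (8 * K0 ^+ 2 * u ^+ 2) by apply: ler_wpM2l; [exact: ltW | exact: expR_ge1Dx].
refine (le_trans _ he); rewrite le_eqVlt; apply/orP; left; apply/eqP; ring.
Qed.

Lemma big_tuple_cons (T : Type) (idx : T) (op : Monoid.com_law idx) (A : finType) n
  (F : n.+1.-tuple A -> T) :
  \big[op/idx]_(s : n.+1.-tuple A) F s =
  \big[op/idx]_(c : A) \big[op/idx]_(w : n.-tuple A) F (cons_tuple c w).
Proof.
rewrite pair_bigA /=.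
rewrite (reindex (fun p : A * n.-tuple A => cons_tuple p.1 p.2)) //=.
exists (fun s => (thead s, behead_tuple s)) => [[c w] _|s _] /=.
  by congr pair; apply: val_inj.
by apply: val_inj => /=; case: s => -[|x s] //= _; rewrite /thead tnth0.
Qed.

Definition Hl (l : nat) (xs : seq R) : R := \sum_(x <- take l xs) x - l%:R * meanR xs.

Lemma Hl0 xs : Hl 0 xs = 0.
Proof. by rewrite /Hl take0 big_nil mul0r subrr. Qed.

Lemma Hl_cons (l : nat) (x : R) (w : seq R) : (l <= size w)%N ->
  Hl l.+1 (x :: w) = (1 - l%:R / (size w)%:R) * (x - meanR (x :: w)) + Hl l w.
Proof.
move=> hl; rewrite /Hl /meanR /= big_cons.
set S := \sum_(y <- w) y; set T := \sum_(y <- take l w) y.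
case: (posnP l) => [->|hl0].
  by rewrite !mul0r subr0 mul1r subr0 mul1r addrAC.
have hN : (0 < size w)%N by apply: leq_trans hl.
have hN' : (size w)%:R != 0 :> R by rewrite pnatr_eq0 -lt0n.
have hN1 : (size w).+1%:R != 0 :> R by rewrite pnatr_eq0.
rewrite -natr1 -(@natr1 R l) in hN1 *.
rewrite big_cons -/S. field.
by rewrite hN' /= natr1.
Qed.

Section Core.
Variables (A : finType) (v : A -> R) (K0 t : R).
Hypotheses (hv : forall a, `|v a| <= K0) (hK : 0 <= K0) (ht : 0 <= t) (hKt : 4 * K0 * t <= 1).

Lemma sym_tnth n (p : n.+1.-tuple A -> R) (g : A -> R -> R) (i : 'I_n.+1) :
  (forall s s' : n.+1.-tuple A, perm_eq s s' -> p s = p s') ->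
  \sum_(s : n.+1.-tuple A) p s * g (tnth s ord0) (meanR (map v s)) =
  \sum_(s : n.+1.-tuple A) p s * g (tnth s i) (meanR (map v s)).
Proof.
move=> hp.
pose h (s : n.+1.-tuple A) := [tuple tnth s (tperm ord0 i j) | j < n.+1].
have hh : involutive h.
  by move=> s; apply: eq_from_tnth => j; rewrite !tnth_mktuple tpermK.
have hperm s : perm_eq (h s) s by apply/tuple_permP; exists (tperm ord0 i).
rewrite (reindex_inj (can_inj hh)) /=.
apply: eq_bigr => s _.
rewrite (hp _ _ (hperm s)) (meanR_perm (perm_map v (hperm s))).
by rewrite tnth_mktuple tpermL.
Qed.

Definition Cst := 8 * K0 ^+ 2 * t ^+ 2.

Lemma core_mgf l : forall n (p : n.-tuple A -> R), (l <= n)%N ->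
  (forall s, 0 <= p s) ->
  (forall s s' : n.-tuple A, perm_eq s s' -> p s = p s') ->
  \sum_(s : n.-tuple A) p s * expR (t * Hl l (map v s)) <=
  expR (Cst * l%:R) * \sum_(s : n.-tuple A) p s.
Proof.
elim: l => [|l IH] n p hln hp0 hp.
  rewrite mulr0 expR0 mul1r; apply: ler_sum => s _.
  by rewrite Hl0 mulr0 expR0 mulr1.
case: n p hln hp0 hp => [//|n] p hln hp0 hp.
have hln' : (l <= n)%N by [].
pose a : R := 1 - l%:R / n%:R.
have ha0 : 0 <= a.
  rewrite /a subr_ge0; case: (posnP n) => [->|hn]; first by rewrite invr0 mulr0.
  by rewrite ler_pdivrMr ?ltr0n // mul1r ler_nat.
have ha1 : a <= 1.
  by rewrite /a lerBlDr lerDl divr_ge0 ?ler0n.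
pose G (s : n.+1.-tuple A) := p s * expR (t * (a * (v (thead s) - meanR (map v s)))).
have step1 : \sum_(s : n.+1.-tuple A) p s * expR (t * Hl l.+1 (map v s)) <=
             expR (Cst * l%:R) * \sum_(s : n.+1.-tuple A) G s.
  rewrite !big_tuple_cons big_distrr /=; apply: ler_sum => c _.
  pose q (w : n.-tuple A) := G (cons_tuple c w).
  have hq0 w : 0 <= q w by rewrite /q /G mulr_ge0 // ltW // expR_gt0.
  have hq (w w' : n.-tuple A) : perm_eq w w' -> q w = q w'.
    move=> hw; rewrite /q /G.
    have hc : perm_eq (cons_tuple c w) (cons_tuple c w') by rewrite /= perm_cons.
    by rewrite (hp _ _ hc) (meanR_perm (perm_map v hc)).
  have := IH n q hln' hq0 hq.
  apply: le_trans; apply: ler_sum => w _.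
  rewrite /q /G /= Hl_cons ?size_map ?size_tuple // mulrDr expRD mulrA.
  by rewrite /thead tnth0.
apply: (le_trans step1).
rewrite -natr1 mulrDr mulr1 expRD -mulrA; apply: ler_wpM2l; first exact: ltW (expR_gt0 _).
have hsym : forall i : 'I_n.+1, \sum_s G s =
   \sum_(s : n.+1.-tuple A) p s * expR (t * (a * (v (tnth s i) - meanR (map v s)))).
  move=> i; rewrite -(sym_tnth (fun x m => expR (t * (a * (v x - m)))) i hp).
  by apply: eq_bigr => s _; rewrite /G /thead.
have -> : \sum_s G s = (n.+1)%:R^-1 * \sum_(i < n.+1) \sum_s G s.
  by rewrite sumr_const card_ord; set S := \sum_s G s; rewrite -(mulr_natl S) mulKf // pnatr_eq0.
rewrite (eq_bigr _ (fun i _ => hsym i)) exchange_big /= mulr_sumr.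
rewrite [X in _ <= X]mulr_sumr; apply: ler_sum => s _.
rewrite -big_distrr /= mulrCA [X in _ <= X]mulrC; apply: ler_wpM2l => //.
have hu0 : 0 <= t * a by rewrite mulr_ge0.
have hu1 : 4 * K0 * (t * a) <= 1.
  apply: le_trans hKt; rewrite mulrA -[X in _ <= X]mulr1; apply: ler_wpM2l => //.
  by rewrite !mulr_ge0.
have hx : forall x, x \in map v s -> `|x| <= K0 by move=> x /mapP [y _ ->].
have := avg_exp_le (xs := map v s) _ hx hK hu0 hu1.
rewrite size_map size_tuple => /(_ isT).
rewrite big_map big_tuple.
under eq_bigr do rewrite mulrA.
move=> H; apply: (le_trans H).
rewrite ler_expR /Cst exprMn; apply: ler_wpM2l; first by rewrite mulr_ge0 ?sqr_ge0.
rewrite -[X in _ <= X]mulr1; apply: ler_wpM2l; first exact: sqr_ge0.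
by rewrite expr2 mulr_ile1.
Qed.

End Core.

Lemma Hl_neg l (xs : seq R) : Hl l (map (fun x => - x) xs) = - Hl l xs.
Proof.
rewrite /Hl /meanR size_map -map_take !big_map !sumrN; ring.
Qed.

Lemma Hl_mean l (xs : seq R) : (0 < l)%N -> (l <= size xs)%N ->
  meanR xs - meanR (take l xs) = - (l%:R^-1 * Hl l xs).
Proof.
move=> hl hls; rewrite /Hl /meanR size_take_min (minn_idPl hls).
have hl' : l%:R != 0 :> R by rewrite pnatr_eq0 -lt0n.
have hs : (size xs)%:R != 0 :> R by rewrite pnatr_eq0 -lt0n (leq_trans hl hls).
by field; rewrite hs hl'.
Qed.

Definition etaK (K0 eps : R) := eps ^+ 2 / (32 * K0 ^+ 2).

Lemma core_tail (A : finType) (v : A -> R) (K0 eps : R) n l (p : n.-tuple A -> R) :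
  (forall a, `|v a| <= K0) -> 0 < K0 -> 0 < eps -> eps <= 4 * K0 ->
  (0 < l)%N -> (l <= n)%N ->
  (forall s, 0 <= p s) ->
  (forall s s' : n.-tuple A, perm_eq s s' -> p s = p s') ->
  \sum_(s : n.-tuple A) p s *
     (if eps <= `|meanR (map v s) - meanR (take l (map v s))| then 1 else 0)
  <= 2 * expR (- (etaK K0 eps * l%:R)) * \sum_(s : n.-tuple A) p s.
Proof.
move=> hv hK he he4 hl hln hp0 hp.
pose t := eps / (16 * K0 ^+ 2).
have hK2 : 0 < K0 ^+ 2 by rewrite exprn_gt0.
have ht : 0 <= t by rewrite /t; apply: divr_ge0; [exact: ltW | apply: mulr_ge0 => //; exact: ltW].
have hKt : 4 * K0 * t <= 1.
  rewrite /t expr2.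
  have -> : 4 * K0 * (eps / (16 * (K0 * K0))) = eps / (4 * K0).
    by field; rewrite gt_eqF.
  by rewrite ler_pdivrMr ?mulr_gt0 // mul1r.
have hv' : forall a, `|- v a| <= K0 by move=> a; rewrite normrN.
have H1 := core_mgf hv (ltW hK) ht hKt hln hp0 hp.
have H2 := core_mgf hv' (ltW hK) ht hKt hln hp0 hp.
have hsl : forall s : n.-tuple A, (l <= size (map v s))%N by move=> s; rewrite size_map size_tuple.
have key : forall s : n.-tuple A,
   (if eps <= `|meanR (map v s) - meanR (take l (map v s))| then 1 else 0) <=
   expR (- (t * l%:R * eps)) * (expR (t * Hl l (map v s)) + expR (t * Hl l (map (fun a => - v a) s))).
  move=> s; have -> : map (fun a => - v a) s = map (fun x => -x) (map v s) by rewrite -map_comp.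
  rewrite Hl_neg mulrDr -!expRD.
  set h := Hl l (map v s).
  rewrite Hl_mean // normrN normrM ger0_norm ?invr_ge0 ?ler0n //.
  have hl' : 0 < l%:R :> R by rewrite ltr0n.
  case: ifP => [|_]; last by rewrite addr_ge0 // ltW // expR_gt0.
  rewrite ler_pdivlMl // => hle.
  case: (lerP 0 h) => h0.
  - rewrite ger0_norm // in hle.
    apply: le_trans (_ : expR (- (t * l%:R * eps) + t * h) <= _); last first.
      by rewrite lerDl ltW // expR_gt0.
    rewrite -[X in X <= _]expR0 ler_expR addrC subr_ge0 -mulrA.
    by apply: ler_wpM2l.
  - rewrite ltr0_norm // in hle.
    apply: le_trans (_ : expR (- (t * l%:R * eps) + t * - h) <= _); last first.
      by rewrite lerDr ltW // expR_gt0.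
    rewrite -[X in X <= _]expR0 ler_expR addrC subr_ge0 -mulrA.
    by apply: ler_wpM2l.
apply: le_trans (_ : \sum_(s : n.-tuple A) p s * (expR (- (t * l%:R * eps)) *
   (expR (t * Hl l (map v s)) + expR (t * Hl l (map (fun a => - v a) s)))) <= _).
  by apply: ler_sum => s _; apply: ler_wpM2l => //; exact: key.
under eq_bigr do rewrite mulrCA mulrDr.
rewrite -mulr_sumr big_split /=.
apply: le_trans (_ : expR (- (t * l%:R * eps)) * (expR (Cst K0 t * l%:R) * \sum_s p s +
   expR (Cst K0 t * l%:R) * \sum_s p s) <= _).
  by apply: ler_wpM2l; [exact: ltW (expR_gt0 _) | exact: lerD].
set S := \sum_s p s; set E := expR (Cst K0 t * l%:R).
have -> : expR (- (t * l%:R * eps)) * (E * S + E * S) = 2 * (expR (- (t * l%:R * eps)) * E) * S.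
  by ring.
rewrite /E -expRD.
have -> : - (t * l%:R * eps) + Cst K0 t * l%:R = - (etaK K0 eps * l%:R).
  rewrite /Cst /t /etaK; field; exact: lt0r_neq0.
by [].
Qed.
End Real.
Section Grid.
Variables (R : realType) (K0 del : R).
Hypotheses (hK : 0 < K0) (hd : 0 < del).

Definition gk := Num.truncn (2 * K0 / del).
Definition gval (c : 'I_gk.+1) : R := - K0 + (c : nat)%:R * del.
Definition Bc (c : 'I_gk.+1) : set R :=
  (if (c : nat) == 0%N then setT else [set x | gval c <= x]) `&`
  (if (c : nat) == gk then setT else [set x | x < gval c + del]).

Lemma gk_le : gk%:R * del <= 2 * K0.
Proof.
have hK' := hK; have hd' := hd.
have h0 : 0 <= 2 * K0 / del by apply: divr_ge0; lra.
by rewrite -ler_pdivlMr // (andP (truncn_itv h0)).1.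
Qed.

Lemma gk_gt : 2 * K0 < gk.+1%:R * del.
Proof.
have hK' := hK; have hd' := hd.
have h0 : 0 <= 2 * K0 / del by apply: divr_ge0; lra.
by rewrite -ltr_pdivrMr // (andP (truncn_itv h0)).2.
Qed.

Lemma gval_bound c : `|gval c| <= K0.
Proof.
have hK' := hK; have hd' := hd.
have h1 : (c : nat)%:R * del <= gk%:R * del by rewrite ler_pM2r // ler_nat -ltnS.
have h2 := gk_le.
have h3 : 0 <= (c : nat)%:R * del by rewrite mulr_ge0 // ltW.
rewrite /gval ler_norml; apply/andP; split; lra.
Qed.

Lemma Bc_meas c : measurable (Bc c).
Proof.
apply: measurableI; case: ifP => _ //.
- have -> : [set x : R | gval c <= x] = `[gval c, +oo[%classic.
    by apply/seteqP; split => x /=; rewrite in_itv /= andbT.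
  exact: measurable_itv.
- have -> : [set x : R | x < gval c + del] = `]-oo, gval c + del[%classic.
    by apply/seteqP; split => x /=; rewrite in_itv /=.
  exact: measurable_itv.
Qed.

Lemma Bc_err c x : Bc c x -> `|x| <= K0 -> `|x - gval c| <= del.
Proof.
have hK' := hK; have hd' := hd.
move=> [h1 h2] hx; move: hx; rewrite ler_norml => /andP [hx1 hx2].
have lo : gval c <= x.
  move: h1; case: ifP => // /eqP c0 _; rewrite /gval c0 mul0r addr0; lra.
have up : x <= gval c + del.
  move: h2; case: ifP => [/eqP cg _|_ /= h]; last exact: ltW.
  have := gk_gt; rewrite /gval cg -natr1 mulrDl mul1r; lra.
rewrite ler_norml; apply/andP; split; lra.
Qed.

Lemma Bc_disj c c' x : Bc c x -> Bc c' x -> c = c'.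
Proof.
have hd' := hd.
wlog: c c' / (c <= c')%N => [H|hle].
  by move=> h1 h2; case: (leqP c c') => h; [exact: H|symmetry; apply: H => //; exact: ltnW].
move=> [_ h2] [h1' _].
apply: val_inj; apply/eqP; rewrite eqn_leq hle /=; case: leqP => // hlt.
have hcg : (c : nat) != gk by rewrite neq_ltn (leq_trans hlt) // -ltnS.
have hc0 : (c' : nat) != 0%N by rewrite -lt0n (leq_ltn_trans _ hlt).
move: h2 h1'; rewrite (negbTE hcg) (negbTE hc0) /= /gval => h2 h1'.
have : ((c : nat).+1%:R : R) <= (c' : nat)%:R by rewrite ler_nat.
rewrite -natr1 => h3.
have : ((c : nat)%:R + 1) * del <= (c' : nat)%:R * del by rewrite ler_pM2r.
rewrite mulrDl mul1r; lra.
Qed.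

Definition qc (x : R) : 'I_gk.+1 := inord (minn (Num.truncn ((x + K0) / del)) gk).

Lemma Bc_cover x : Bc (qc x) x.
Proof.
have hK' := hK; have hd' := hd.
set k := Num.truncn ((x + K0) / del).
have hq : (qc x : nat) = minn k gk by rewrite /qc inordK // ltnS geq_minr.
split.
- case: ifP => [_ //|/negbT]; rewrite hq -lt0n => hpos.
  have hk : (0 < k)%N by apply: leq_trans hpos (geq_minl _ _).
  have hx0 : 0 <= (x + K0) / del.
    by move: hk; rewrite truncn_gt0 => h; apply: le_trans h.
  have := (andP (truncn_itv hx0)).1; rewrite -/k ler_pdivlMr // => hk'.
  have : (minn k gk)%:R * del <= k%:R * del by rewrite ler_pM2r // ler_nat geq_minl.
  rewrite /= /gval hq; lra.
- case: ifP => [_ //|/negbT]; rewrite hq => hne /=.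
  have hkg : minn k gk = k by move: hne; rewrite /minn; case: ltnP => //; rewrite eqxx.
  rewrite /gval hq hkg.
  case: (lerP 0 ((x + K0) / del)) => hx0.
    have := (andP (truncn_itv hx0)).2; rewrite -/k ltr_pdivrMr // -natr1 mulrDl mul1r; lra.
  have hk0 : k = 0%N by apply/truncn0Pn; rewrite -ltNge; apply: (lt_trans hx0); rewrite ltr01.
  rewrite hk0 mul0r addr0.
  move: hx0; rewrite ltr_pdivrMr // mul0r; lra.
Qed.

End Grid.

Section Atoms.
Context d (T : measurableType d) (R : realType) (P : probability T R).
Variables (m : nat) (B : 'I_m.+1 -> set R).
Hypotheses (hBm : forall c, measurable (B c)) (hcov : forall x, exists c, B c x)
  (hdisj : forall c c' x, B c x -> B c' x -> c = c').

Definition atom n (f : nat -> T -> R) (s : n.-tuple 'I_m.+1) : set T :=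
  [set w | forall i : 'I_n, B (tnth s i) (f i w)].

Lemma atom_cons n f c (s : n.-tuple 'I_m.+1) :
  atom f (cons_tuple c s) = f 0%N @^-1` B c `&` atom (fun i => f i.+1) s.
Proof.
rewrite /cons_tuple; apply/seteqP; split => w /=.
- move=> h; split; first by have := h ord0; rewrite tnth0.
  by move=> i; have := h (lift ord0 i); rewrite tnthS lift0.
- move=> [h0 h] i; case: (unliftP ord0 i) => [j ->|->].
  + by rewrite tnthS lift0; exact: h.
  + by rewrite tnth0.
Qed.

Lemma atom0 f : atom f [tuple] = setT.
Proof. by apply/seteqP; split => // w _ []. Qed.

Lemma preim_meas (g : T -> R) (A : set R) : measurable_fun setT g -> measurable A ->
  measurable (g @^-1` A).
Proof. by move=> mg mA; have := mg measurableT A mA; rewrite setTI. Qed.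

Lemma atom_meas n : forall f (s : n.-tuple 'I_m.+1),
  (forall i, measurable_fun setT (f i)) -> measurable (atom f s).
Proof.
elim: n => [|n IH] f s mf.
  by rewrite [s]tuple0 atom0.
case/tupleP: s => c s.
have -> : [tuple of c :: s] = cons_tuple c s by [].
rewrite atom_cons; apply: measurableI; first exact: preim_meas.
by apply: IH => i; exact: mf.
Qed.

Lemma partition n : forall (f : nat -> T -> R) (D : set T),
  (forall i, measurable_fun setT (f i)) -> measurable D ->
  P D = \sum_(s : n.-tuple 'I_m.+1) P (D `&` atom f s).
Proof.
elim: n => [|n IH] f D mf mD.
  rewrite (big_pred1 [tuple]) ?atom0 ?setIT // => s.
  by apply/esym/eqP; exact: tuple0.
rewrite big_tuple_cons.
have hU : D = \big[setU/set0]_(c < m.+1) (D `&` (f 0%N @^-1` B c)).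
  rewrite -bigcup_mkord_ord; apply/seteqP; split => w.
  - move=> hw; have [c hc] := hcov (f 0%N w).
    exists (c : nat); first by rewrite /= ltn_ord.
    by rewrite inord_val.
  - by case=> k _ [].
rewrite {1}hU measure_bigsetU_ord //.
- apply: eq_bigr => c _.
  have hDc : measurable (D `&` f 0%N @^-1` B c) by apply: measurableI => //; exact: preim_meas.
  apply: etrans (IH (fun i => f i.+1) _ (fun i => mf i.+1) hDc) _.
  by apply: eq_bigr => s _; rewrite atom_cons setIA.
- by move=> c; apply: measurableI => //; exact: preim_meas.
- by move=> c c' _ _ [w [[_ h1] [_ h2]]]; exact: hdisj h1 h2.
Qed.

End Atoms.


Lemma approx_mean (R : realType) (K0 del : R) (hK : 0 < K0) (hd : 0 < del)
  n (s : n.-tuple 'I_(gk K0 del).+1) (x : nat -> R) k :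
  (forall i : 'I_n, Bc (tnth s i) (x i)) -> (forall i, `|x i| <= K0) ->
  (0 < k)%N -> (k <= n)%N ->
  `|(k%:R^-1 * \sum_(i < k) x i) - meanR (take k (map (@gval _ K0 del) s))| <= del.
Proof.
move=> hB hx hk hkn.
have hks : (k <= size (map (@gval _ K0 del) s))%N by rewrite size_map size_tuple.
have c0 : 'I_(gk K0 del).+1 := ord0.
have hsum : \sum_(y <- take k (map (@gval _ K0 del) s)) y = \sum_(i < k) gval (nth ord0 s i).
  rewrite (big_nth 0) size_take_min (minn_idPl hks) big_mkord.
  apply: eq_bigr => i _; rewrite nth_take // (nth_map ord0) // size_tuple.
  exact: leq_trans (ltn_ord i) hkn.
rewrite /meanR size_take_min (minn_idPl hks) hsum -mulrBr -sumrB normrM.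
have hk' : 0 < k%:R :> R by rewrite ltr0n.
rewrite gtr0_norm ?invr_gt0 // ler_pdivrMl //.
apply: (le_trans (ler_norm_sum _ _ _)).
have : \sum_(i < k) `|x i - gval (nth ord0 s i)| <= \sum_(i < k) del.
  apply: ler_sum => i _.
  have hi : (i < n)%N by exact: leq_trans (ltn_ord i) hkn.
  have := hB (Ordinal hi); rewrite (tnth_nth ord0) /= => hBi.
  exact: Bc_err hBi (hx i).
by rewrite sumr_const card_ord mulr_natl.
Qed.

Section Main.
Context d (T : measurableType d) (R : realType) (P : probability T R) (e : nat -> T -> R).
Hypotheses (me : forall i, measurable_fun setT (e i)) (hex : exchangeable P e).

Lemma atom_perm m (B : 'I_m.+1 -> set R) n (s s' : n.-tuple 'I_m.+1) :
  (forall c, measurable (B c)) ->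
  perm_eq s s' -> P (atom B e s) = P (atom B e s').
Proof.
move=> hB /tuple_permP [sg hs].
have hs' : s = [tuple tnth s' (sg i) | i < n] by apply: val_inj.
have := hex sg (fun i => hB (tnth s i)).
have -> : [set w | forall i : 'I_n, B (tnth s i) (e (sg i) w)] = atom B e s'.
  apply/seteqP; split => w /= h.
  - move=> j; have := h (sg^-1 j)%g; rewrite hs' tnth_mktuple permKV; exact.
  - by move=> i; rewrite hs' tnth_mktuple; exact: h.
by move=> <-.
Qed.


Lemma mset_bool (g : T -> bool) : measurable_fun setT g -> measurable [set w | g w].
Proof. move=> mg; have := mg measurableT [set true] I; rewrite setTI; exact. Qed.

Lemma Mk_meas k : measurable_fun setT (Mk e k).
Proof.
rewrite /Mk; apply: measurable_realfun.measurable_funM; first exact: measurable_cst.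
exact: measurable_sum.
Qed.

Lemma fin_bound (K eps0 : R) (he : 0 < eps0) l n :
  (forall i, {ae P, forall w, `|e i w| <= K}) ->
  (0 < l)%N -> (l < n)%N ->
  (P [set w | (eps0 <= `|Mk e n w - Mk e l w|)%R] <=
    (2 * expR (- (etaK (`|K| + eps0 + 1) (eps0 / 2) * l%:R)))%:E)%E.
Proof.
move=> hae hl hln.
set K0 := `|K| + eps0 + 1.
have hK0 : 0 < K0 by rewrite /K0; have := normr_ge0 K; lra.
set del := eps0 / 4.
have hd : 0 < del by rewrite /del; lra.
have hKK : K <= K0 by rewrite /K0; have := ler_norm K; lra.
pose B := @Bc R K0 del.
have hBm : forall c, measurable (B c) by move=> c; exact: Bc_meas.
have hcov : forall x, exists c, B c x by move=> x; exists (qc K0 del x); exact: Bc_cover.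
have hdisj : forall c c' x, B c x -> B c' x -> c = c' by move=> c c' x; exact: Bc_disj.
case: (ae_foralln hae) => N [mN PN0 hN].
set E := [set w | eps0 <= `|Mk e n w - Mk e l w|].
have mE : measurable E.
  apply: mset_bool; apply: measurable_realfun.measurable_fun_ler; first exact: measurable_cst.
  apply: measurableT_comp; first exact: measurable_realfun.normr_measurable.
  by apply: measurable_realfun.measurable_funB; exact: Mk_meas.
pose p (s : n.-tuple 'I_(gk K0 del).+1) := fine (P (atom B e s)).
have hpE s : P (atom B e s) = (p s)%:E.
  by rewrite /p fineK // fin_num_measure //; exact: (atom_meas hBm s me).
have hp0 s : 0 <= p s by rewrite /p fine_ge0.
have hpp : forall s s' : n.-tuple _, perm_eq s s' -> p s = p s'.
  by move=> s s' hs; rewrite /p (atom_perm hBm hs).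
have hsum1 : \sum_(s : n.-tuple 'I_(gk K0 del).+1) p s = 1.
  have := partition P hBm hcov hdisj n me (@measurableT _ T).
  rewrite probability_setT.
  under eq_bigr do rewrite setTI hpE.
  by rewrite sumEFin => -[].
pose ind (s : n.-tuple 'I_(gk K0 del).+1) : R :=
  if eps0 / 2 <= `|meanR (map (@gval _ K0 del) s) -
                   meanR (take l (map (@gval _ K0 del) s))| then 1 else 0.
have hstep s : (P (E `&` atom B e s) <= (p s * ind s)%:E)%E.
  rewrite /ind; case: ifP => hb.
    have ma := atom_meas hBm s me.
    rewrite mulr1 -hpE; apply: le_measure; rewrite ?inE.
    - exact: measurableI.
    - exact: ma.
    - exact: subIsetr.
  rewrite mulr0; apply: (@le_trans _ _ (P N)); last by rewrite PN0.
  have ma := atom_meas hBm s me.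
  apply: le_measure; rewrite ?inE //; first exact: measurableI.
  move=> w [hEw haw].
  have [//|hwN] := pselect (N w).
  have hall : forall i, `|e i w| <= K0.
    move=> i; apply: le_trans hKK.
    by move: i; apply: contrapT => hc; apply: hwN; apply: hN.
  exfalso; move/negbT: hb; apply/negP; rewrite negbK.
  have h1 := approx_mean hK0 hd haw hall (leq_ltn_trans (leq0n _) hln) (leqnn n).
  have h2 := approx_mean hK0 hd haw hall hl (ltnW hln).
  rewrite take_oversize ?size_map ?size_tuple // in h1.
  move: hEw; rewrite /E /= /Mk.
  set a := n%:R^-1 * _ in h1 *; set b := l%:R^-1 * _ in h2 *.
  set ma1 := meanR _ in h1 *; set mb := meanR _ in h2 *.
  move=> hab.
  have : `|a - b| <= `|ma1 - mb| + `|a - ma1| + `|b - mb|.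
    have -> : a - b = (ma1 - mb) + (a - ma1) - (b - mb) by ring.
    apply: (le_trans (ler_normB _ _)); rewrite lerD2r; exact: ler_normD.
  rewrite /del in h1 h2; lra.
rewrite (partition P hBm hcov hdisj n me mE).
apply: (@le_trans _ _ (\sum_(s : n.-tuple 'I_(gk K0 del).+1) (p s * ind s)%:E)%E).
  by apply: lee_sum => s _; exact: hstep.
rewrite sumEFin lee_fin.
have he2 : 0 < eps0 / 2 by lra.
have he4 : eps0 / 2 <= 4 * K0 by rewrite /K0; have := normr_ge0 K; lra.
have := core_tail (fun c => gval_bound hK0 hd c) hK0 he2 he4 hl (ltnW hln) hp0 hpp.
by rewrite hsum1 mulr1.
Qed.

Lemma mset_dev (f g : T -> R) (a : R) : measurable_fun setT f -> measurable_fun setT g ->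
  measurable [set w | a <= `|f w - g w|].
Proof.
move=> mf mg.
apply: mset_bool; apply: measurable_realfun.measurable_fun_ler; first exact: measurable_cst.
apply: measurableT_comp; first exact: measurable_realfun.normr_measurable.
exact: measurable_realfun.measurable_funB.
Qed.

Lemma inf_bound (Minf : T -> R) (eps : R) (l : nat) (c : R) :
  measurable_fun setT Minf ->
  {ae P, forall w, (fun k => Mk e k w) @ \oo --> Minf w} ->
  0 < eps ->
  (forall n, (l < n)%N -> (P [set w | (eps / 2 <= `|Mk e n w - Mk e l w|)%R] <= c%:E)%E) ->
  (P [set w | (eps <= `|Minf w - Mk e l w|)%R] <= c%:E)%E.
Proof.
move=> mMinf hconv he hb.
pose A n := [set w | (eps / 2 <= `|Mk e n w - Mk e l w|)%R].
have mA n : measurable (A n) by apply: mset_dev; exact: Mk_meas.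
pose F N := \bigcap_k (if (N <= k)%N && (l < k)%N then A k else setT).
have mF N : measurable (F N).
  by apply: bigcapT_measurable => k; case: ifP.
have mU : measurable (\bigcup_N F N) by exact: bigcupT_measurable.
have ndF : nondecreasing_seq F.
  move=> N M hNM; rewrite subsetEset => w hw k _; have := hw k I.
  case hN: ((N <= k)%N && (l < k)%N); case hM: ((M <= k)%N && (l < k)%N) => //= _.
  move/andP: hM => [h1 h2]; move: hN; by rewrite (leq_trans hNM h1) h2.
have hFc N : (P (F N) <= c%:E)%E.
  have hlt : (l < N + l.+1)%N by rewrite addnS ltnS leq_addl.
  apply: (le_trans _ (hb _ hlt)).
  apply: le_measure; [by rewrite inE | by rewrite inE; exact: mA | ].
  move=> w hw; have := hw (N + l.+1)%N I.
  by rewrite leq_addr hlt.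
have hUc : (P (\bigcup_N F N) <= c%:E)%E.
  have hc := @nondecreasing_cvg_mu _ _ _ P F mF mU ndF.
  rewrite -(cvg_lim _ hc) //; apply: lime_le; first by apply/cvg_ex; eexists; exact: hc.
  by apply: nearW => N; exact: hFc.
case: hconv => N' [mN' PN'0 hN'].
set E' := [set w | (eps <= `|Minf w - Mk e l w|)%R].
have mE' : measurable E' by apply: mset_dev => //; exact: Mk_meas.
have hsub : E' `<=` (\bigcup_N F N) `|` N'.
  move=> w hw; have [hNw|hNw] := pselect (N' w); first by right.
  left.
  have hcv : (fun k => Mk e k w) @ \oo --> Minf w.
    by apply: contrapT => hc; apply: hNw; apply: hN'.
  have he2 : 0 < eps / 2 by rewrite divr_gt0.
  move/cvgrPdist_lt: hcv => /(_ _ he2) [N _ hN].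
  exists N => // k _; case: ifP => // /andP [h1 h2].
  have := hN k h1; rewrite /A /=.
  move: hw; rewrite /E' /= => hw hk.
  have : `|Minf w - Mk e l w| <= `|Minf w - Mk e k w| + `|Mk e k w - Mk e l w|.
    have -> : Minf w - Mk e l w = (Minf w - Mk e k w) + (Mk e k w - Mk e l w) by ring.
    exact: ler_normD.
  move=> hle; lra.
have mUN : measurable (\bigcup_N F N `|` N') by apply: measurableU.
apply: (le_trans (le_measure _ _ _ hsub)); rewrite ?inE //.
apply: (le_trans (measureU2 P mU mN')).
apply: (@le_trans _ _ (P (\bigcup_N F N) + 0)%E); last by rewrite adde0.
apply: leeD => //; rewrite le_eqVlt; apply/orP; left; apply/eqP; exact: PN'0.
Qed.

End Main.
End Aux.
Import Aux.
Theorem mainTheorem6 (R : realType) (K eps : R) (heps : 0 < eps) :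
  exists2 eta : R, 0 < eta &
  forall (d : measure_display) (T : measurableType d) (P : probability T R)
         (e : nat -> T -> R) (Minf : T -> R),
    (forall i, measurable_fun setT (e i)) ->
    exchangeable P e ->
    (forall i, {ae P, forall w, `|e i w| <= K}) ->
    measurable_fun setT Minf ->
    {ae P, forall w, (fun k => Mk e k w) @ \oo --> Minf w} ->
    (forall l n : nat, (l < n)%N ->
       (P [set w | (eps <= `|Mk e n w - Mk e l w|)%R]
         <= (2 * expR (- (eta * l%:R)))%:E)%E) /\
    (forall l : nat,
       (P [set w | (eps <= `|Minf w - Mk e l w|)%R]
         <= (2 * expR (- (eta * l%:R)))%:E)%E).
Proof.
have he2 : 0 < eps / 2 by lra.
pose K0 := `|K| + eps / 2 + 1.
have hK0 : 0 < K0 by rewrite /K0; have := normr_ge0 K; lra.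
exists (etaK K0 (eps / 2 / 2)).
  by rewrite /etaK divr_gt0 // ?exprn_gt0 // ?mulr_gt0 // ?exprn_gt0 //; lra.
move=> d T P e Minf me hex hae mMinf hconv.
set eta := etaK K0 (eps / 2 / 2).
have hfin : forall l n, (0 < l)%N -> (l < n)%N ->
    (P [set w | (eps / 2 <= `|Mk e n w - Mk e l w|)%R] <= (2 * expR (- (eta * l%:R)))%:E)%E.
  by move=> l n hl hln; exact: (fin_bound me hex he2 hae hl hln).
have hl0 (A : set T) : measurable A -> (P A <= (2 * expR (- (eta * 0%:R)))%:E)%E.
  move=> mA; apply: (le_trans (probability_le1 P mA)).
  by rewrite mulr0 oppr0 expR0 mulr1 lee_fin ler1n.
split.
- move=> l n hln; case: (posnP l) => [->|hl].
    by apply: hl0; apply: mset_dev; exact: Mk_meas.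
  apply: (le_trans _ (hfin l n hl hln)).
  apply: le_measure; rewrite ?inE; try (apply: mset_dev; exact: Mk_meas).
  by move=> w /=; lra.
- move=> l; case: (posnP l) => [->|hl].
    by apply: hl0; apply: mset_dev => //; exact: Mk_meas.
  apply: inf_bound => // n hln; exact: hfin.
Qed.
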